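(* Let $w$ be a positive integer and let $x$ be an integer with $0\le x\le p-1$ and $x\notin\{1,p-1\}$. If $T_n(x)\equiv x\pmod{p^w}$, then $T'_n(x)\equiv n\pmod{p^w}$ or $T'_n(x)\equiv -n\pmod{p^w}$.
   Context: $p$ is a prime with $p>3$ and $n>1$ is an integer with $\gcd(n,p)=\gcd(n,p^2-1)=1$. $T_n(x)\in\mathbb{Z}[x]$ is the Chebyshev polynomial of the first kind: $T_0=1$, $T_1=x$, $T_d=2xT_{d-1}-T_{d-2}$; $T'_n$ is its derivative. *)

(* Defs.v *)
From mathcomp Require Import all_boot all_order all_algebra.
Set Implicit Arguments. Unset Strict Implicit. Unset Printing Implicit Defensive.
Import Order.TTheory GRing.Theory Num.Theory.
Local Open Scope ring_scope.

(* Chebyshev polynomials of the first kind over Z: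
   T_0 = 1, T_1 = X, T_{d+2} = 2 X T_{d+1} - T_d.
   chebT_pair d = (T_d, T_{d+1}). *)
Fixpoint chebT_pair (d : nat) : {poly int} * {poly int} :=
  match d with
  | 0%N => (1, 'X)
  | d'.+1 => let pr := chebT_pair d' in
             (pr.2, 2%:P * 'X * pr.2 - pr.1)
  end.

Definition chebT (d : nat) : {poly int} := (chebT_pair d).1.

(* Main.v *)
Require Import Defs.
From mathcomp Require Import all_boot all_order all_algebra.
From mathcomp Require Import ring zify.
Import Order.TTheory GRing.Theory Num.Theory.
Local Open Scope ring_scope.

Fixpoint TV (d : nat) : {poly int} * {poly int} :=
  match d with
  | 0%N => (1, 0)
  | d'.+1 => let pr := TV d' in
             ('X * pr.1 + ('X^2 - 1) * pr.2, pr.1 + 'X * pr.2)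
  end.

Lemma TV_cheb d : chebT_pair d = ((TV d).1, (TV d.+1).1).
Proof.
elim: d => [|d IH] /=; first by congr pair; rewrite mulr1 mulr0 addr0.
rewrite IH /=; congr pair.
have -> : (2%:P : {poly int}) = 1 + 1 by rewrite -[2]/(1+1) polyCD.
case: (TV d) => a b /=; ring.
Qed.

Lemma TV_deriv d : ((TV d).1)^`() = d%:R * (TV d).2 /\
  ('X^2 - 1) * ((TV d).2)^`() = d%:R * (TV d).1 - 'X * (TV d).2.
Proof.
elim: d => [|d [H1 H2]] /=; first by rewrite !derivE !mulr0 mul0r subr0.
move: H1 H2; case: (TV d) => a b /= H1 H2.
rewrite !derivE H1 /=.
have HX : (('X^2 - 1 : {poly int})^`()) = 2%:R * 'X.
  by rewrite !derivE expr1 /=; ring.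
split.
  rewrite H2 expr1 subr0 [d.+1%:R]mulrSr mulr2n; ring.
transitivity (('X^2 - 1) * (d%:R * b + b) + 'X * (('X^2 - 1) * b^`())); first by ring.
rewrite H2 [d.+1%:R]mulrSr; ring.
Qed.

Lemma cheb_key n : ('X^2 - 1) * ((chebT n)^`())^+2 = (n%:R)^+2 * ((chebT n)^+2 - 1).
Proof.
have -> : chebT n = (TV n).1 by rewrite /chebT TV_cheb.
have [H1 _] := TV_deriv n. rewrite H1.
suff E : (TV n).1 ^+ 2 = 1 + ('X^2 - 1) * (TV n).2 ^+ 2.
  by rewrite E; ring.
elim: n {H1} => [|d IH] /=; first by rewrite expr1n expr0n /= mulr0 addr0.
case: (TV d) IH => a b /= IH.
transitivity (a ^+ 2 - ('X^2 - 1) * b ^+ 2 + ('X^2 - 1) * (a + 'X * b) ^+ 2); first by ring.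
rewrite IH; ring.
Qed.

Lemma copw (p w : nat) (a : int) : prime p -> (0 < w)%N ->
  ~~ (p%:Z %| a)%Z -> coprimez (p ^ w)%:Z a.
Proof.
move=> pp w0 nd; rewrite coprimezE /= coprime_pexpl // prime_coprime //.
Qed.

Lemma ndx (p : nat) (x : int) : prime p -> (3 < p)%N ->
  0 <= x -> x <= (p%:Z - 1) -> x != 1 -> x != p%:Z - 1 ->
  ~~ (p%:Z %| x ^+ 2 - 1)%Z.
Proof.
move=> pp p3 x0 xp x1 xp1.
have [k xk] : exists k : nat, x = k%:Z by exists `|x|%N; lia.
subst x.
move: x1 xp1 => /eqP x1 /eqP xp1.
have kp : (k.+2 <= p)%N by lia.
have k1 : k != 1%N by lia.
clear x0 xp x1 xp1.
have -> : (k%:Z ^+ 2 - 1 = (k%:Z - 1) * (k%:Z + 1)) by ring.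
rewrite dvdzE abszM Euclid_dvdM // negb_or.
have -> : absz (k%:Z + 1) = k.+1 by lia.
rewrite /=; apply/andP; split.
  case: k kp k1 => [|k] kp k1; first by rewrite /= dvdn1; case: (p) pp p3 => [|[]].
  have -> : absz (k.+1%:Z - 1) = k by lia.
  have k0 : (0 < k)%N by lia.
  apply/negP => /(dvdn_leq k0); lia.
apply/negP => /(dvdn_leq (ltn0Sn k)); lia.
Qed.

Theorem lemma4 (p n w : nat) (x : int) :
  prime p -> (3 < p)%N -> (1 < n)%N ->
  coprime n p -> coprime n (p ^ 2 - 1) ->
  (0 < w)%N ->
  0 <= x -> x <= (p%:Z - 1) -> x != 1 -> x != p%:Z - 1 ->
  ((chebT n).[x] = x %[mod (p ^ w)%:Z])%Z ->
  ((chebT n)^`().[x] = n%:Z %[mod (p ^ w)%:Z])%Z \/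
  ((chebT n)^`().[x] = - n%:Z %[mod (p ^ w)%:Z])%Z.
Proof.
move=> pp p3 n1 cnp _ w0 x0 xp x1 xp1 /eqP H.
have ndx' := @ndx p x pp p3 x0 xp x1 xp1.
have K := congr1 (horner^~ x) (cheb_key n).
rewrite /= !(hornerM, horner_exp, hornerD, hornerN, hornerXn, hornerC, hornerMn, hornerX) in K.
move: H K; set t := (chebT n).[x]; set d := (chebT n)^`().[x]; set m := (p ^ w)%:Z.
rewrite eqz_mod_dvd => H K.
have H2 : (m %| (x ^+ 2 - 1) * ((d - n%:Z) * (d + n%:Z)))%Z.
  have -> : (x ^+ 2 - 1) * ((d - n%:Z) * (d + n%:Z)) = n%:Z ^+ 2 * (t + x) * (t - x).
    transitivity ((x ^+ 2 - 1) * d ^+ 2 - n%:Z ^+ 2 * (x ^+ 2 - 1)); first by ring.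
    rewrite K; ring.
  exact: dvdz_mull.
rewrite Gauss_dvdzr in H2; last exact: copw.
have pn : ~~ (p%:Z %| 2 * n%:Z)%Z.
  rewrite dvdzE abszM /= Euclid_dvdM // negb_or; apply/andP; split.
    by apply/negP => /(dvdn_leq (isT : (0 < 2)%N)); lia.
  by rewrite -prime_coprime // coprime_sym.
case: (boolP (p%:Z %| d - n%:Z)%Z) => hd.
  left; apply/eqP; rewrite eqz_mod_dvd.
  rewrite Gauss_dvdzl in H2 => //; apply: copw => //.
  apply/negP => he; move/negP: pn; apply.
  have -> : 2 * n%:Z = (d + n%:Z) - (d - n%:Z) by ring.
  exact: rpredB.
right; apply/eqP; rewrite eqz_mod_dvd opprK.
by rewrite Gauss_dvdzr in H2 => //; apply: copw.
Qed.
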